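(* Let $x,y\in\mathrm{Cay}$. The following are equivalent: (1) $[x]\ge[y]$; (2) for each $x'\in[x]$ there exists $y'\in[y]$ such that $x'\ge y'$.
   Context: A Cayley permutation is a word of positive integers in which every integer from $1$ to its maximum occurs; $\mathrm{Cay}$ is the set of all of them. Containment $y\le x$: indices $i_1<\dots<i_k$ ($k$ the length of $y$) with $x(i_s)<x(i_t)\iff y(s)<y(t)$ and $x(i_s)=x(i_t)\iff y(s)=y(t)$. For $x$ of length $n$, $\gamma(x)$ is the permutation obtained by sorting the pairs $(x(i),i)$ increasingly by first coordinate, ties by decreasing second coordinate, and reading the second coordinates. $x\sim y$ iff $\gamma(x)=\gamma(y)$; $[x]$ is the class of $x$. For classes, $[x]\ge[y]$ iff $x'\ge y'$ for some $x'\in[x]$ and $y'\in[y]$. *)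

(* Defs.v *)
From mathcomp Require Import all_boot.
Set Implicit Arguments. Unset Strict Implicit. Unset Printing Implicit Defensive.

(* Words of positive integers are represented as [seq nat]; positions are
   0-based internally (x(i) is [nth 0 x i]). *)

Definition is_cay (x : seq nat) : Prop :=
  all (fun a => 0 < a) x /\ forall k, 1 <= k <= \max_(a <- x) a -> k \in x.

Definition contains (x y : seq nat) : Prop :=
  exists idx : seq nat,
    [/\ size idx = size y, sorted ltn idx, all (fun i => i < size x) idx &
      forall s t, s < size y -> t < size y ->
        ((nth 0 x (nth 0 idx s) < nth 0 x (nth 0 idx t)) = (nth 0 y s < nth 0 y t))
        /\ ((nth 0 x (nth 0 idx s) == nth 0 x (nth 0 idx t)) = (nth 0 y s == nth 0 y t))].

Definition gamma_rel (p q : nat * nat) : bool :=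
  (p.1 < q.1) || ((p.1 == q.1) && (q.2 <= p.2)).

Definition gamma (x : seq nat) : seq nat :=
  map snd (sort gamma_rel (zip x (iota 1 (size x)))).

Definition in_class (x x' : seq nat) : Prop := is_cay x' /\ gamma x' = gamma x.

Definition class_ge (x y : seq nat) : Prop :=
  exists x' y', [/\ in_class x x', in_class y y' & contains x' y'].

(* Main.v *)
Require Import Defs.
From mathcomp Require Import all_boot.
From mathcomp Require Import zify.

Definition Rw (a : seq nat) : rel nat := fun i j =>
  (nth 0 a i < nth 0 a j) || ((nth 0 a i == nth 0 a j) && (j <= i)).

Lemma Rw_trans a : transitive (Rw a).
Proof.
move=> j i k; rewrite /Rw.
case/orP=> [h1|/andP[/eqP h1 h2]]; case/orP=> [h3|/andP[/eqP h3 h4]].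
- by rewrite (ltn_trans h1 h3).
- by rewrite -h3 h1.
- by rewrite h1 h3.
- by rewrite h1 h3 eqxx (leq_trans h4 h2) orbT.
Qed.

Lemma Rw_total a : total (Rw a).
Proof.
move=> i j; rewrite /Rw.
case: (ltngtP (nth 0 a i) (nth 0 a j)) => //= _.
exact: leq_total.
Qed.

Lemma Rw_anti a i j : Rw a i j -> Rw a j i -> i = j.
Proof.
rewrite /Rw.
case: (ltngtP (nth 0 a i) (nth 0 a j)) => //= _.
move=> h1 h2; apply/eqP; rewrite eqn_leq h1 h2 //.
Qed.

Lemma gamma_sort a : gamma a = map succn (sort (Rw a) (iota 0 (size a))).
Proof.
rewrite /gamma.
have -> : zip a (iota 1 (size a)) =
  map (fun i => (nth 0 a i, i.+1)) (iota 0 (size a)).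
  rewrite -{1}(mkseq_nth 0 a) /mkseq (iotaDl 1 0).
  by elim: (iota 0 (size a)) => //= i l ->.
rewrite sort_map -map_comp.
by [].
Qed.

Lemma sorted_index_rel (r : rel nat) (s : seq nat) :
  transitive r -> (forall i j, r i j -> r j i -> i = j) ->
  (forall i, r i i) -> sorted r s -> uniq s ->
  {in s &, forall i j, r i j = (index i s <= index j s)}.
Proof.
move=> tr an rf so un i j hi hj.
case: (ltngtP (index i s) (index j s)) => h.
- by rewrite (sorted_ltn_index tr so _ _ hi hj h).
- apply/negP => rij.
  have rji := sorted_ltn_index tr so _ _ hj hi h.
  by move: h; rewrite (an _ _ rij rji) ltnn.
- have e : i = j by rewrite -(nth_index 0 hi) h nth_index.
  by rewrite e rf.
Qed.


Lemma rf_Rw c k : Rw c k k.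
Proof. by rewrite /Rw eqxx leqnn orbT. Qed.

Lemma gamma_Rw_eq a b : gamma a = gamma b ->
  size a = size b /\
  forall i j, i < size a -> j < size a -> Rw a i j = Rw b i j.
Proof.
move=> hg.
have hs : size a = size b.
  by move: (congr1 size hg); rewrite !gamma_sort !size_map !size_sort !size_iota.
split=> //.
move: hg; rewrite !gamma_sort hs => /(inj_map succn_inj) hs2.
move=> i j hi hj.
have hi' : i \in sort (Rw a) (iota 0 (size b)) by rewrite mem_sort mem_iota /= ?hs.
have hj' : j \in sort (Rw a) (iota 0 (size b)) by rewrite mem_sort mem_iota /= ?hs.
have un : uniq (sort (Rw a) (iota 0 (size b))) by rewrite sort_uniq iota_uniq.
rewrite (@sorted_index_rel _ _ (@Rw_trans a) (@Rw_anti a) (rf_Rw a)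
          (sort_sorted (@Rw_total a) _) un _ _ hi' hj').
rewrite hs2 in hi' hj' un *.
by rewrite (@sorted_index_rel _ _ (@Rw_trans b) (@Rw_anti b) (rf_Rw b)
          (sort_sorted (@Rw_total b) _) un _ _ hi' hj').
Qed.

Lemma Rw_eq_gamma a b : size a = size b ->
  (forall i j, i < size a -> j < size a -> Rw a i j = Rw b i j) ->
  gamma a = gamma b.
Proof.
move=> hs hR; rewrite !gamma_sort -hs; congr (map _ _).
apply: (@sorted_eq _ (Rw a)).
- exact: Rw_trans.
- move=> i j /andP[h1 h2]; exact: (@Rw_anti a i j h1 h2).
- exact: (sort_sorted (@Rw_total a)).
- rewrite (@eq_in_sorted _ (fun i => i < size a) (Rw a) (Rw b)).
  + exact: (sort_sorted (@Rw_total b)).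
  + by move=> i j; apply: hR.
  + by apply/allP => i; rewrite mem_sort mem_iota.
- by rewrite perm_sort perm_sym perm_sort.
Qed.

Lemma iso_Rw a b : size a = size b ->
  (forall s t, s < size a -> t < size a ->
     ((nth 0 a s < nth 0 a t) = (nth 0 b s < nth 0 b t)) /\
     ((nth 0 a s == nth 0 a t) = (nth 0 b s == nth 0 b t))) ->
  forall s t, s < size a -> t < size a -> Rw a s t = Rw b s t.
Proof.
move=> _ h s t hs ht; rewrite /Rw.
by have [-> ->] := h s t hs ht.
Qed.

Lemma sorted_idx_leq (idx : seq nat) s t : sorted ltn idx ->
  s < size idx -> t < size idx ->
  (nth 0 idx t <= nth 0 idx s) = (t <= s).
Proof.
move=> so hs ht.
have hom := sorted_ltn_nth ltn_trans 0 so.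
case: (ltngtP t s) => h.
- by rewrite ltnW // hom.
- by apply/negbTE; rewrite -ltnNge hom.
- by rewrite h leqnn.
Qed.

Lemma Rw_sub a (idx : seq nat) s t : sorted ltn idx ->
  s < size idx -> t < size idx ->
  Rw (map (nth 0 a) idx) s t = Rw a (nth 0 idx s) (nth 0 idx t).
Proof.
move=> so hs ht; rewrite /Rw !(nth_map 0) //.
by rewrite sorted_idx_leq.
Qed.

Definition stdw (w : seq nat) : seq nat :=
  map (fun v => (index v (sort leq (undup w))).+1) w.

Lemma max_le (s : seq nat) m : (forall v, v \in s -> v <= m) -> \max_(a <- s) a <= m.
Proof.
elim: s => [|v s IH] h; first by rewrite big_nil.
rewrite big_cons geq_max h ?mem_head //=.
by apply: IH => u hu; apply: h; rewrite in_cons hu orbT.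
Qed.

Lemma std_cay w : is_cay (stdw w).
Proof.
set d := sort leq (undup w).
split; first by apply/allP => v /mapP [u _ ->].
move=> k /andP[k1 km].
have hm : \max_(a <- stdw w) a <= size d.
  by apply: max_le => v /mapP [u hu ->]; rewrite index_mem mem_sort mem_undup.
have hk : k.-1 < size d by move: (leq_trans km hm); case: k k1 {km}.
have hin : nth 0 d k.-1 \in w.
  by rewrite -mem_undup -(mem_sort leq) mem_nth.
apply/mapP; exists (nth 0 d k.-1) => //.
rewrite index_uniq //; first by case: k k1 {km hk hin}.
by rewrite sort_uniq undup_uniq.
Qed.

Lemma std_iso w u v : u \in w -> v \in w ->
  ((index u (sort leq (undup w))).+1 < (index v (sort leq (undup w))).+1) = (u < v) /\
  ((index u (sort leq (undup w))).+1 == (index v (sort leq (undup w))).+1) = (u == v).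
Proof.
set d := sort leq (undup w) => hu hv.
have hu' : u \in d by rewrite mem_sort mem_undup.
have hv' : v \in d by rewrite mem_sort mem_undup.
have un : uniq d by rewrite sort_uniq undup_uniq.
have so : sorted leq d by apply: sort_sorted; exact: leq_total.
have key := @sorted_index_rel leq d leq_trans
  (fun i j h1 h2 => anti_leq (introT andP (conj h1 h2))) leqnn so un.
split.
- by rewrite ltnS !ltnNge (key v u hv' hu').
- rewrite eqSS; apply/eqP/eqP => [h|->] //.
  by rewrite -(nth_index 0 hu') h nth_index.
Qed.

Theorem lemma4p14 (x y : seq nat) :
  is_cay x -> is_cay y ->
  (class_ge x y <->
   forall x', in_class x x' -> exists y', in_class y y' /\ contains x' y').
Proof.
move=> cx cy; split.
- case=> x0 [y0 [[cx0 gx0] [cy0 gy0] [idx [hsz hso hal hcond]]]] x' [cx' gx'].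
  have [sx hx] := @gamma_Rw_eq _ _ (etrans gx' (esym gx0)).
  set w := map (nth 0 x') idx.
  have hw : forall s, s < size idx -> nth 0 w s \in w.
    by move=> s hs; rewrite mem_nth // size_map.
  have isoy : forall s t, s < size idx -> t < size idx ->
     ((nth 0 (stdw w) s < nth 0 (stdw w) t) = (nth 0 w s < nth 0 w t)) /\
     ((nth 0 (stdw w) s == nth 0 (stdw w) t) = (nth 0 w s == nth 0 w t)).
    move=> s t hs ht.
    have hs' : s < size w by rewrite size_map.
    have ht' : t < size w by rewrite size_map.
    rewrite /stdw (nth_map 0 0 _ hs') (nth_map 0 0 _ ht'). exact: (@std_iso w _ _ (hw s hs) (hw t ht)).
  have hin : forall u, u < size idx -> nth 0 idx u < size x'.
    by move=> u hu; rewrite sx; apply: (all_nthP 0 hal).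
  exists (stdw w); split.
  + split; first exact: std_cay.
    rewrite -gy0; apply: Rw_eq_gamma; first by rewrite !size_map hsz.
    move=> s t; rewrite !size_map => hs ht.
    have e1 : Rw (stdw w) s t = Rw w s t.
      apply: iso_Rw; rewrite ?size_map // => s' t'; rewrite !size_map => hs' ht'.
    rewrite e1 (Rw_sub x' idx s t hso hs ht) hx ?hin // -(Rw_sub x0 idx s t hso hs ht).
    have hs0 : s < size (map (nth 0 x0) idx) by rewrite size_map.
    have ht0 : t < size (map (nth 0 x0) idx) by rewrite size_map.
    have hsz2 : size (map (nth 0 x0) idx) = size y0 by rewrite size_map hsz.
    apply: (@iso_Rw _ _ hsz2 _ s t hs0 ht0).
    move=> s' t'; rewrite size_map => hs' ht'.
    rewrite !(nth_map 0) //; apply: hcond; by rewrite -hsz.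
  + exists idx; split => //; first by rewrite !size_map.
    by apply/allP => i /(allP hal); rewrite sx.
    move=> s t; rewrite !size_map => hs ht.
    have [h1 h2] := isoy s t hs ht.
    by rewrite h1 h2 /w !(nth_map 0).
- move=> h; have [y' [hy' hc]] := h x (conj cx erefl).
  by exists x, y'; split.
Qed.
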